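(* Let $T$ be a symmetric tree and let $g:A\to B$ be a function such that the functigraph $F_T$ is symmetric. Then $fix(F_T)=2|V(T)|-t$ for some $t\in\{2,3\}$ if and only if $T=P_2$.
   Context: A set $S\subseteq V(H)$ is a fixing set of a graph $H$ if the only automorphism of $H$ fixing every vertex of $S$ is the identity; $fix(H)$ is the minimum cardinality of a fixing set of $H$. A connected graph is symmetric if its fixing number is nonzero. Functigraph: let $G_1,G_2$ be disjoint copies of a connected graph $G$, with $A=V(G_1)$, $B=V(G_2)$, and let $g:A\to B$ be a function. The functigraph $F_G$ has vertex set $A\cup B$ and edge set $E(G_1)\cup E(G_2)\cup\{ug(u):u\in A\}$. *)

(* Defs.v *)
From mathcomp Require Import all_boot all_fingroup.
Set Implicit Arguments. Unset Strict Implicit. Unset Printing Implicit Defensive.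
Local Open Scope nat_scope.

Section Graphs.
Variable W : finType.

Definition simple_graph (e : rel W) : Prop := symmetric e /\ irreflexive e.

Definition connected_graph (e : rel W) : Prop := forall x y : W, connect e x y.

Definition acyclic_graph (e : rel W) : Prop :=
  forall p : seq W, uniq p -> (3 <= size p)%N -> ~~ path.cycle e p.

Definition is_tree (e : rel W) : Prop :=
  simple_graph e /\ 0 < #|W| /\ connected_graph e /\ acyclic_graph e.

Definition is_aut (e : rel W) (s : {perm W}) : bool :=
  [forall x, forall y, e (s x) (s y) == e x y].

Definition fixing_set (e : rel W) (S : {set W}) : bool :=
  [forall s : {perm W}, (is_aut e s && [forall x in S, s x == x]) ==> (s == 1%g)].

(* fix(H): minimum cardinality of a fixing set ([set: W] is always one) *)
Definition fixing_number (e : rel W) : nat :=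
  \big[minn/#|W|]_(S : {set W} | fixing_set e S) #|S|.

Definition isomorphic (W' : finType) (e : rel W) (e' : rel W') : Prop :=
  exists f : W -> W', bijective f /\ forall x y, e' (f x) (f y) = e x y.
End Graphs.

Definition path_graph (n : nat) : rel 'I_n :=
  fun i j => (i.+1 == j :> nat) || (j.+1 == i :> nat).

(* functigraph F_G of (V, e) with g : A -> B; A = inl copy, B = inr copy *)
Definition functigraph (V : finType) (e : rel V) (g : V -> V) : rel (V + V) :=
  fun x y => match x, y with
  | inl u, inl v => e u v
  | inr u, inr v => e u v
  | inl u, inr v => g u == v
  | inr v, inl u => g u == v
  end.
Arguments path_graph n _ _ : clear implicits.

(* Main.v *)
Require Import Defs.
From mathcomp Require Import all_boot all_fingroup zify.
Local Open Scope nat_scope.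

Lemma bigmin_le (I : finType) (P : pred I) (F : I -> nat) x i :
  P i -> \big[minn/x]_(j | P j) F j <= F i.
Proof.
move=> Pi.
have: i \in [seq j <- index_enum I | P j] by rewrite mem_filter Pi mem_index_enum.
rewrite -big_filter; elim: [seq j <- index_enum I | P j] => [//|a s IH].
rewrite big_cons inE => /orP[/eqP->|/IH]; first exact: geq_minl.
by move=> h; apply: leq_trans (geq_minr _ _) h.
Qed.

Lemma fix_le_set (W : finType) (E : rel W) (S : {set W}) :
  fixing_set E S -> fixing_number E <= #|S|.
Proof. by move=> h; rewrite /fixing_number; apply: bigmin_le. Qed.

Definition piof (r p : seq nat) (i : nat) :=
  if i \in r then nth 0 p (index i r) else i.

Definition check (m : nat) (H : nat -> nat -> bool) (r : seq nat) : bool :=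
  all (fun p => all (fun i => piof r p i == i) (iota 0 m) ||
     ~~ all (fun i => all (fun k => H (piof r p i) (piof r p k) == H i k)
                        (iota 0 m)) (iota 0 m))
      (permutations r).

Lemma cert_fix (W : finType) (E : rel W) (m : nat) (phi : nat -> W)
  (H : nat -> nat -> bool) (r : seq nat) :
  (forall i j, i < m -> j < m -> phi i = phi j -> i = j) ->
  (forall i j, i < m -> j < m -> E (phi i) (phi j) = H i j) ->
  uniq r -> all (fun i => i < m) r -> check m H r ->
  fixing_number E <= #|W| - size r.
Proof.
move=> pinj Hadj ur /allP rm chk.
have rlt : forall i, i \in r -> i < m by move=> i /rm.
have umap : uniq (map phi r).
  rewrite map_inj_in_uniq // => i k ir kr; exact: pinj (rlt _ ir) (rlt _ kr).
set S := [set w | w \notin map phi r].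
have fixS : fixing_set E S.
  apply/forallP => s; apply/implyP => /andP [/forallP aut /forallP fx].
  have hE : forall x y, E (s x) (s y) = E x y.
    by move=> x y; move: (aut x) => /forallP /(_ y) /eqP.
  have hF : forall w, w \notin map phi r -> s w = w.
    by move=> w wn; move: (fx w); rewrite inE wn /= => /eqP.
  have key : forall i, i \in r -> s (phi i) \in map phi r.
    move=> i ir; apply/negPn/negP => h.
    have := hF _ h => /perm_inj h2.
    by move: h; rewrite h2 map_f.
  pose J i := nth 0 r (index (s (phi i)) (map phi r)).
  have JP : forall i, i \in r -> phi (J i) = s (phi i) /\ J i \in r.
    move=> i ir; have k := key i ir.
    have lt : index (s (phi i)) (map phi r) < size r by rewrite -(size_map phi) index_mem.
    split; last exact: mem_nth.
    by rewrite /J -(nth_map 0 (phi 0)) // nth_index.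
  pose p := map J r.
  have up : uniq p.
    rewrite map_inj_in_uniq // => i k ir kr eJ.
    have [h1 _] := JP i ir; have [h2 _] := JP k kr.
    have : s (phi i) = s (phi k) by rewrite -h1 -h2 eJ.
    move/perm_inj; exact: pinj (rlt _ ir) (rlt _ kr).
  have sub : {subset p <= r} by move=> w /mapP [i ir ->]; case: (JP i ir).
  have [|_ eqi] := uniq_min_size up sub; first by rewrite size_map.
  have pp : p \in permutations r by rewrite mem_permutations uniq_perm.
  have piJ : forall i, i \in r -> piof r p i = J i.
    move=> i ir; rewrite /piof ir /p (nth_map 0) ?index_mem // nth_index //.
  have phipi : forall i, i < m -> phi (piof r p i) = s (phi i).
    move=> i im; case ir: (i \in r); first by rewrite piJ //; case: (JP i ir).
    rewrite /piof ir hF //; apply/negP => /mapP [k kr ek].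
    by move: ir; rewrite (pinj _ _ im (rlt _ kr) ek) kr.
  have pim : forall i, i < m -> piof r p i < m.
    move=> i im; case ir: (i \in r); last by rewrite /piof ir.
    by rewrite piJ //; case: (JP i ir) => _ /rlt.
  move: chk => /allP /(_ _ pp) /orP [/allP ids | /negP []]; last first.
    apply/allP => i; rewrite mem_iota add0n => /andP [_ im].
    apply/allP => k; rewrite mem_iota add0n => /andP [_ km].
    by rewrite -Hadj ?pim // !phipi // hE Hadj.
  apply/eqP/permP => w; rewrite perm1.
  case wr: (w \in map phi r); last by rewrite hF ?wr.
  case/mapP: wr => i ir ->.
  have im := rlt _ ir.
  have := ids i; rewrite mem_iota add0n im => /(_ isT) /eqP e.
  by rewrite -phipi // e.
apply: (leq_trans (fix_le_set _ _ _ fixS)).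
have c := cardsC S.
have : #|~: S| = size r.
  rewrite -(size_map phi) -(card_uniqP umap); apply: eq_card => w.
  by rewrite !inE negbK.
move=> h; rewrite h in c; rewrite -c addnK //.
Qed.

Definition cd (c0 c1 c2 i : nat) := if i == 0 then c0 else if i == 1 then c1 else c2.
Definition Hg (k : nat) (cdf : nat -> nat) (i j : nat) : bool :=
  if (i < k) && (j < k) then (i.+1 == j) || (j.+1 == i)
  else if (k <= i) && (k <= j) then (i.+1 == j) || (j.+1 == i)
  else if i < k then cdf i + k == j else cdf j + k == i.
Fixpoint subsets (n : nat) (s : seq nat) : seq (seq nat) :=
  match n, s with
  | 0, _ => [:: [::]]
  | n'.+1, [::] => [::]
  | n'.+1, x :: s' => map (cons x) (subsets n' s') ++ subsets n s'
  end.
Definition cert (m k : nat) (H : nat -> nat -> bool) :=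
  head [::] [seq r <- subsets k (iota 0 m) | check m H r].
Definition good m k H := let r := cert m k H in
  uniq r && all (fun i => i < m) r && (size r == k) && check m H r.
Lemma all6 : all (fun c0 => all (fun c1 => all (fun c2 =>
   good 6 4 (Hg 3 (cd c0 c1 c2))) (iota 0 4)) (iota 0 4)) (iota 0 4).
Proof. vm_compute. reflexivity. Qed.
Lemma all4 : all (fun c0 => all (fun c1 =>
   good 4 2 (Hg 2 (cd c0 c1 0))) (iota 0 2)) (iota 0 2).
Proof. vm_compute. reflexivity. Qed.

Lemma eq_nth_index (T : eqType) (d w : T) (L : seq T) j :
  uniq L -> j < size L -> (w == nth d L j) = (index w L == j).
Proof.
move=> uL jl; apply/eqP/eqP => [->|jl']; first exact: index_uniq.
case wL: (w \in L); first by rewrite -jl' nth_index.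
by move: jl; rewrite -jl' index_mem wL.
Qed.

Definition phiL (V : Type) (d : V) (L : seq V) (i : nat) : V + V :=
  if i < size L then inl (nth d L i) else inr (nth d L (i - size L)).

Lemma sub_lt n j : j < 2 * n -> n <= j -> j - n < n.
Proof. lia. Qed.
Lemma sub_inj n i j : n <= i -> n <= j -> i - n = j - n -> i = j.
Proof. lia. Qed.
Lemma lem1 n a j : n <= j -> (a == j - n) = (a + n == j).
Proof. move=> h; apply/idP/idP; lia. Qed.
Lemma lem2 n i j : n <= i -> n <= j ->
  (((i - n).+1 == j - n) || ((j - n).+1 == i - n)) = ((i.+1 == j) || (j.+1 == i)).
Proof. move=> h1 h2; apply/idP/idP; lia. Qed.

Lemma func_fix (V : finType) (e : rel V) (g : V -> V) (d : V) (L : seq V)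
  (cdf : nat -> nat) (r : seq nat) :
  uniq L ->
  (forall i j, i < size L -> j < size L ->
     e (nth d L i) (nth d L j) = (i.+1 == j) || (j.+1 == i)) ->
  (forall i, i < size L -> cdf i = index (g (nth d L i)) L) ->
  uniq r -> all (fun i => i < 2 * size L) r -> check (2 * size L) (Hg (size L) cdf) r ->
  fixing_number (functigraph e g) <= 2 * #|V| - size r.
Proof.
move=> uL eL cL ur ar chk.
have -> : 2 * #|V| = #|{: V + V}| by rewrite card_sum; lia.
apply: (@cert_fix _ _ _ (phiL _ d L) _ _ _ _ ur ar chk).
  move=> i j il jl; rewrite /phiL.
  case: ltnP => ik; case: ltnP => jk // [].
    by move/(congr1 (index^~ L)); rewrite !index_uniq.
  move/(congr1 (index^~ L)); rewrite !index_uniq //; try exact: sub_lt.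
  exact: sub_inj.
move=> i j il jl; rewrite /phiL /Hg.
case: ltnP => ik; case: ltnP => jk /=.
- by rewrite eL.
- by rewrite eq_nth_index ?cL ?lem1 //; apply: sub_lt.
- by rewrite eq_nth_index ?cL ?lem1 //; apply: sub_lt.
- by rewrite eL ?lem2 //; apply: sub_lt.
Qed.

Lemma exists_notin (V : finType) (s : seq V) : size s < #|V| -> exists w, w \notin s.
Proof.
move=> h; apply/existsP; move: h; apply: contraLR => /existsPn H.
rewrite -leqNgt; apply: leq_trans (card_size s); apply: subset_leq_card.
by apply/subsetP => w _; have := H w; rewrite negbK.
Qed.

Lemma uniq_le_card (V : finType) (s : seq V) : uniq s -> size s <= #|V|.
Proof. by move/card_uniqP <-; apply: max_card. Qed.

Lemma tree_P3 (V : finType) (e : rel V) :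
  simple_graph e -> connected_graph e -> acyclic_graph e -> 3 <= #|V| ->
  exists x y z, [/\ uniq [:: x; y; z], e x y, e y z & ~~ e x z].
Proof.
move=> [sym irr] conn acyc n3.
have [a _] := @exists_notin V [::] (leq_trans (isT : 1 <= 3) n3).
have [b] := @exists_notin V [:: a] (leq_trans (isT : 2 <= 3) n3).
rewrite inE => ba.
have : connect e a b by apply: conn.
case/connectP => [[|a1 p]]; first by move=> _ /= eb; rewrite eb eqxx in ba.
case/andP => ea1 _ _.
have fin : forall x y z, e x y -> e y z -> x != z -> exists x y z, [/\ uniq [:: x; y; z], e x y, e y z & ~~ e x z].
  move=> x y z exy eyz xz; exists x, y, z.
  have xy : x != y by apply/eqP => exy'; rewrite exy' irr in exy.
  have yz : y != z by apply/eqP => eyz'; rewrite eyz' irr in eyz.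
  have ncyc := acyc [:: x; y; z].
  split => //.
    by rewrite /= !inE negb_or xy xz yz.
  apply/negP => exz; move: ncyc; rewrite /= !inE negb_or xy xz yz /=.
  by move=> /(_ isT isT); rewrite exy eyz (sym z x) exz.
case: (boolP [exists z, e a1 z && (z != a)]) => [/existsP [z /andP [h1 h2]] | H1].
  by apply: (fin a a1 z) => //; rewrite eq_sym.
case: (boolP [exists z, e a z && (z != a1)]) => [/existsP [z /andP [h1 h2]] | H2].
  by apply: (fin a1 a z) => //; rewrite ?(sym a1 a) // eq_sym.
exfalso.
have [w] := @exists_notin V [:: a; a1] (leq_trans (isT : 3 <= 3) n3).
have : connect e a w by apply: conn.
case/connectP => q pq ->.
suff : forall u, u \in [:: a; a1] -> path e u q -> last u q \in [:: a; a1].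
  by move=> /(_ a); rewrite inE eqxx => /(_ isT pq) ->.
elim: q {pq} => [//|v q IH] u uin /= /andP [euv pq]; apply: IH pq.
move: uin; rewrite !inE => /orP [/eqP eu|/eqP eu]; subst u.
  move/existsPn: H2 => /(_ v); rewrite euv /= negbK => ->; by rewrite orbT.
move/existsPn: H1 => /(_ v); rewrite euv /= negbK => ->; by [].
Qed.

Lemma bound3 (V : finType) (e : rel V) (g : V -> V) :
  is_tree e -> 3 <= #|V| -> fixing_number (functigraph e g) <= 2 * #|V| - 4.
Proof.
move=> [[sym irr] [_ [conn acyc]]] n3.
have [x [y [z [u exy eyz nxz]]]] := @tree_P3 V e (conj sym irr) conn acyc n3.
set L := [:: x; y; z].
set c0 := index (g x) L; set c1 := index (g y) L; set c2 := index (g z) L.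
have cb : forall w, index w L < 4 by move=> w; apply: leq_ltn_trans (index_size w L) _.
have h0 : c0 \in iota 0 4 by rewrite mem_iota cb.
have h1 : c1 \in iota 0 4 by rewrite mem_iota cb.
have h2 : c2 \in iota 0 4 by rewrite mem_iota cb.
move: all6 => /allP /(_ c0 h0).
move=> /allP /(_ c1 h1).
move=> /allP /(_ c2 h2).
rewrite /good /=; set r := cert _ _ _.
case/andP => /andP [/andP [ur ar] /eqP sr] chk.
rewrite -sr; apply: (@func_fix V e g x L (cd c0 c1 c2) r) => //.
  have eyx : e y x by rewrite sym.
  have ezy : e z y by rewrite sym.
  have nzx : e z x = false by rewrite sym; apply/negbTE.
  move=> [|[|[|i]]] [|[|[|j]]] //= _ _; by rewrite ?irr ?exy ?eyz ?eyx ?ezy ?nzx ?(negbTE nxz).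
by move=> [|[|[|i]]].
Qed.

Lemma bound2 (V : finType) (e : rel V) (g : V -> V) (x y : V) :
  simple_graph e -> x != y -> e x y -> (forall w, w \in [:: x; y]) ->
  fixing_number (functigraph e g) <= 2 * #|V| - 2.
Proof.
move=> [sym irr] xy exy allin.
set L := [:: x; y].
set c0 := index (g x) L; set c1 := index (g y) L.
have cb : forall w, index w L < 2 by move=> w; rewrite -[2]/(size L) index_mem allin.
have h0 : c0 \in iota 0 2 by rewrite mem_iota cb.
have h1 : c1 \in iota 0 2 by rewrite mem_iota cb.
move: all4 => /allP /(_ c0 h0) /allP /(_ c1 h1).
rewrite /good /=; set r := cert _ _ _.
case/andP => /andP [/andP [ur ar] /eqP sr] chk.
apply: leq_trans (@func_fix V e g x L (cd c0 c1 0) r _ _ _ ur ar chk) _; last by rewrite sr.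
  by rewrite /L /= inE xy.
  have eyx : e y x by rewrite sym.
  move=> [|[|i]] [|[|j]] //= _ _; by rewrite ?irr ?exy ?eyx.
by move=> [|[|i]].
Qed.

Theorem theorem3p10 (V : finType) (e : rel V) (g : V -> V) :
  is_tree e ->
  0 < fixing_number e ->
  0 < fixing_number (functigraph e g) ->
  ((exists t : nat, t \in [:: 2; 3] /\
      fixing_number (functigraph e g) = 2 * #|V| - t)
   <-> isomorphic e (path_graph 2)).
Proof.
move=> tr fe ff; have [[sym irr] [n0 [conn acyc]]] := tr.
split.
- case=> t [tin ft].
  case: (ltnP 2 #|V|) => hn.
    have := bound3 V e g tr hn; rewrite ft.
    by move: tin; rewrite !inE => /orP [/eqP->|/eqP->]; lia.
  case: (ltnP 1 #|V|) => hn1; last first.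
    exfalso; move: fe; rewrite lt0n => /negP []; rewrite -leqn0.
    apply: leq_trans (fix_le_set V e set0 _) _; last by rewrite cards0.
    apply/forallP => s; apply/implyP => _; apply/eqP.
    apply: (@perm_on_id _ s [set: V]); last by rewrite cardsT.
    by apply/subsetP => w; rewrite inE.
  have [a _] := @exists_notin V [::] n0.
  have [b] := @exists_notin V [:: a] hn1.
  rewrite inE => ba.
  have allin : forall w, w \in [:: a; b].
    move=> w; apply/negPn/negP => wn.
    have : uniq [:: w; a; b] by rewrite /= wn inE eq_sym ba.
    by move/uniq_le_card => /= h; move: hn; rewrite leqNgt h.
  have eab : e a b.
    have : connect e a b by apply: conn.
    case/connectP => [[|a1 p]]; first by move=> _ /= eb; rewrite eb eqxx in ba.
    case/andP => ea1 _ _.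
    move: (allin a1); rewrite !inE => /orP [/eqP e1|/eqP e1].
      by rewrite e1 irr in ea1.
    by rewrite -e1.
  pose f w : 'I_2 := if w == a then ord0 else ord_max.
  pose h (i : 'I_2) := if val i == 0 then a else b.
  have fa : f a = ord0 by rewrite /f eqxx.
  have fb : f b = ord_max by rewrite /f (negbTE ba).
  have wab : forall w, w = a \/ w = b.
    by move=> w; move: (allin w); rewrite !inE => /orP [/eqP|/eqP]; [left|right].
  exists f; split.
    exists h.
      by move=> w; case: (wab w) => ->; rewrite ?fa ?fb.
    by case=> [[|[|k]] Hk] //; rewrite /h /=; [rewrite fa | rewrite fb];
      apply: val_inj.
  move=> u v; case: (wab u) => ->; case: (wab v) => ->;
    by rewrite ?fa ?fb ?irr ?eab // sym.
- case=> f [[h fK hK] fe2].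
  have cV : #|V| = 2 by rewrite (bij_eq_card (Bijective fK hK)) card_ord.
  set x := h ord0; set y := h ord_max.
  have exy : e x y by rewrite -fe2 !hK.
  have xy : x != y.
    by apply/eqP => /(congr1 f); rewrite !hK => /(congr1 val).
  have allin : forall w, w \in [:: x; y].
    move=> w; rewrite -(fK w) !inE; case: (f w) => [[|[|k]] Hk] //.
      by rewrite /x (_ : Ordinal Hk = ord0) ?eqxx //; apply: val_inj.
    by rewrite /y (_ : Ordinal Hk = ord_max) ?eqxx ?orbT //; apply: val_inj.
  have := bound2 V e g x y (conj sym irr) xy exy allin.
  rewrite cV => hle.
  exists (4 - fixing_number (functigraph e g)); split; last by lia.
  rewrite !inE; apply/orP.
  case: (ltnP 1 (fixing_number (functigraph e g))) => h2.
    by left; apply/eqP; lia.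
  by right; apply/eqP; lia.
Qed.
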